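(* Let $T$ be a rooted binary phylogenetic $X$-tree with strictly positive edge lengths $\lambda_T(e)$ such that the ranking $\pi_T$ is strict and reversible with respect to some $X'\subset X$. Let $k,d>0$. If all edge lengths are multiplied by $k$ and then $d$ is added to the length of every pendant edge, the resulting edge lengths again give a strict ranking that is reversible with respect to $X'$.
   Context: A rooted binary phylogenetic $X$-tree ($X$ finite) is a rooted tree whose root $\rho$ has in-degree 0 and out-degree 2, all edges directed away from $\rho$, all other interior vertices have in-degree 1 and out-degree 2, and whose leaves are bijectively labelled by $X$. Edges incident to leaves are pendant edges. Every edge $e$ has a strictly positive length $\lambda_e$. The Fair Proportion index of $x\in X$ is $FP_T(x)=\sum_{e\in P(T;\rho,x)}\lambda_e/D_e$, where $P(T;\rho,x)$ is the path from $\rho$ to $x$ and $D_e$ is the number of leaves descended from $e$. For $Y\subseteq X$, the induced subtree $T_Y$ is obtained from the minimal subtree of $T$ connecting $Y$ by suppressing all non-root vertices of in- and out-degree 1, adding the lengths of merged edges; if the root then has out-degree 1, it and its incident edge are deleted. The ranking $\pi_T$ is strict if all values $FP_T(x)$ are pairwise distinct. For $X'\subset X$, $\widetilde X=X\setminus X'$ and $\widetilde T=T_{\widetilde X}$, a strict ranking $\pi_T$ is reversible with respect to $X'$ if for all distinct $x_i,x_j\in\widetilde X$, $FP_T(x_i)>FP_T(x_j)$ implies $FP_{\widetilde T}(x_i)<FP_{\widetilde T}(x_j)$. *)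

(* Defs.v *)
From HB Require Import structures.
From mathcomp Require Import all_boot all_order all_algebra.
Set Implicit Arguments. Unset Strict Implicit. Unset Printing Implicit Defensive.
Import Order.TTheory GRing.Theory Num.Theory.
Local Open Scope ring_scope.

(* A rooted binary tree with leaves labelled in X and real edge lengths.
   [Node l a r b] is an interior vertex (or the root) with two outgoing edges:
   the edge to the subtree [l] has length [a], the edge to [r] has length [b].
   The root has no incoming edge. *)
Inductive btree (X : Type) (R : Type) : Type :=
  | Leaf of X
  | Node of btree X R & R & btree X R & R.
Arguments Leaf {X R}.
Arguments Node {X R}.

Section Trees.
Variables (X : eqType) (R : realFieldType).

Fixpoint leaves (t : btree X R) : seq X :=
  match t with
  | Leaf x => [:: x]
  | Node l _ r _ => leaves l ++ leaves r
  end.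

Fixpoint pos_lengths (t : btree X R) : bool :=
  match t with
  | Leaf _ => true
  | Node l a r b => [&& 0 < a, 0 < b, pos_lengths l & pos_lengths r]
  end.

(* rooted binary phylogenetic X-tree with X = leaves t: the root has
   out-degree 2 and the leaf labelling is injective *)
Definition phylo_tree (t : btree X R) : bool :=
  uniq (leaves t) && (if t is Node _ _ _ _ then true else false).

(* Fair Proportion index: sum over edges e on the root-to-x path of
   lambda_e / D_e, D_e = number of leaves below e. *)
Fixpoint FP (t : btree X R) (x : X) : R :=
  match t with
  | Leaf _ => 0
  | Node l a r b =>
      if x \in leaves l then a / (size (leaves l))%:R + FP l x
      else if x \in leaves r then b / (size (leaves r))%:R + FP r x
      else 0
  end.

Definition strict_ranking (t : btree X R) : Prop :=
  forall x y, x \in leaves t -> y \in leaves t -> x != y -> FP t x != FP t y.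

(* Restriction to the leaves satisfying P, with suppression of degree-2
   vertices (lengths of merged edges added).  Returns the restricted
   subtree together with the extra length to be added to its incoming edge. *)
Fixpoint restrict (P : pred X) (t : btree X R) : option (btree X R * R) :=
  match t with
  | Leaf x => if P x then Some (Leaf x, 0) else None
  | Node l a r b =>
      match restrict P l, restrict P r with
      | Some (l', e), Some (r', f) => Some (Node l' (a + e) r' (b + f), 0)
      | Some (l', e), None => Some (l', a + e)
      | None, Some (r', f) => Some (r', b + f)
      | None, None => None
      end
  end.

(* induced subtree T_Y for Y = {x in leaves t | P x}; if the root ends up with
   out-degree 1 it is deleted together with its incident edge (the extra
   length at the top is discarded). *)
Definition induced (P : pred X) (t : btree X R) : option (btree X R) :=
  omap fst (restrict P t).

Definition Xtilde (t : btree X R) (X' : seq X) : pred X :=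
  fun x => (x \in leaves t) && (x \notin X').

Definition reversible (t : btree X R) (X' : seq X) : Prop :=
  strict_ranking t /\
  forall t', induced (Xtilde t X') t = Some t' ->
  forall xi xj, Xtilde t X' xi -> Xtilde t X' xj -> xi != xj ->
    FP t xj < FP t xi -> FP t' xi < FP t' xj.

Fixpoint transform (k d : R) (t : btree X R) : btree X R :=
  match t with
  | Leaf x => Leaf x
  | Node l a r b =>
      Node (transform k d l) (k * a + (if l is Leaf _ then d else 0))
           (transform k d r) (k * b + (if r is Leaf _ then d else 0))
  end.

End Trees.

(* Main.v *)
Require Import Defs.
From mathcomp Require Import all_boot all_order all_algebra.
From mathcomp Require Import ring.
Import Order.TTheory GRing.Theory Num.Theory.
Local Open Scope ring_scope.

Section Aux.
Variables (X : eqType) (R : realFieldType).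

Definition isLeaf (t : btree X R) : bool := if t is Leaf _ then true else false.

Lemma leaves_tr k d (t : btree X R) : leaves (transform k d t) = leaves t.
Proof. by elim: t => //= l IHl a r IHr b; rewrite IHl IHr; clear IHl IHr. Qed.

Lemma FP_tr k d (t : btree X R) x : x \in leaves t ->
  FP (transform k d t) x = k * FP t x + (if isLeaf t then 0 else d).
Proof.
elim: t => [y|l IHl a r IHr b] /=; first by rewrite mulr0 addr0.
rewrite !leaves_tr => Hx.
case: ifP => Hl.
  rewrite IHl //; case: l IHl Hl Hx => [y|l1 a1 r1 b1] _ _ _ /=.
    by rewrite divr1 !mulr0 !addr0 divr1; ring.
  by rewrite addr0; ring.
rewrite mem_cat Hl /= in Hx; rewrite Hx IHr //.
case: r IHr Hx => [y|l1 a1 r1 b1] _ _ /=.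
  by rewrite divr1 !mulr0 !addr0 divr1; ring.
by rewrite addr0; ring.
Qed.

Lemma restrict_tr k d (P : pred X) (t : btree X R) :
  restrict P (transform k d t) =
  omap (fun p => (transform k d p.1,
     k * p.2 + (if isLeaf p.1 then d else 0) - (if isLeaf t then d else 0)))
   (restrict P t).
Proof.
elim: t => [y|l IHl a r IHr b] /=.
  by case: (P y) => //=; rewrite mulr0 add0r subrr.
rewrite IHl IHr; clear IHl IHr.
case: (restrict P l) => [[l' e]|]; case: (restrict P r) => [[r' f]|] //=.
- by rewrite mulr0 add0r subr0; congr (Some (Node _ _ _ _, _));
    case: l' => [?|????]; case: r' => [?|????]; case: l => [?|????]; case: r => [?|????] /=; ring.
- by rewrite subr0; congr (Some (_, _)); case: l' => [?|????];
    case: l => [?|????] /=; ring.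
- by rewrite subr0; congr (Some (_, _)); case: r' => [?|????];
    case: r => [?|????] /=; ring.
Qed.

Lemma restrict_None (P : pred X) (t : btree X R) :
  restrict P t = None -> filter P (leaves t) = [::].
Proof.
elim: t => [y|l IHl a r IHr b] /=; first by case: (P y).
rewrite filter_cat.
case E1: (restrict P l) => [[??]|]; case E2: (restrict P r) => [[??]|] //.
by move=> _; rewrite IHl // IHr.
Qed.

Lemma leaves_restrict (P : pred X) (t t' : btree X R) e :
  restrict P t = Some (t', e) -> leaves t' = filter P (leaves t).
Proof.
elim: t t' e => [y|l IHl a r IHr b] t' e /=.
  by case: (P y) => // -[<- _].
rewrite filter_cat.
case El: (restrict P l) => [[l' e1]|]; case Er: (restrict P r) => [[r' f]|] //.
- by move=> [<- _] /=; rewrite (IHl _ _ El) (IHr _ _ Er).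
- by move=> [<- _]; rewrite (IHl _ _ El) (restrict_None _ _ Er) cats0.
- by move=> [<- _]; rewrite (IHr _ _ Er) (restrict_None _ _ El).
Qed.

End Aux.

Theorem corollary2 (X : eqType) (R : realFieldType) (t : btree X R)
    (X' : seq X) (k d : R) :
  phylo_tree t -> pos_lengths t ->
  {subset X' <= leaves t} -> (exists x, (x \in leaves t) && (x \notin X')) ->
  strict_ranking t -> reversible t X' ->
  0 < k -> 0 < d ->
  strict_ranking (transform k d t) /\ reversible (transform k d t) X'.
Proof.
move=> _ _ _ _ Hs [_ Hrev] k0 _.
have Hst : strict_ranking (transform k d t).
  move=> x y; rewrite !leaves_tr => Hx Hy Hxy.
  rewrite !FP_tr // (inj_eq (addIr _)) (inj_eq (mulfI _)) ?Hs //.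
  by rewrite gt_eqF.
split=> //; split=> // t2.
have EX : Xtilde (transform k d t) X' = Xtilde t X'.
  by rewrite /Xtilde leaves_tr.
rewrite EX /induced restrict_tr.
case E: (restrict (Xtilde t X') t) => [[t' e]|] //= [<-] xi xj Hi Hj Hij.
have Hl : forall x, Xtilde t X' x -> x \in leaves t'.
  by move=> x Hx; rewrite (leaves_restrict _ _ _ _ _ _ E) mem_filter Hx /= ; case/andP: Hx.
have Li : xi \in leaves t by case/andP: Hi.
have Lj : xj \in leaves t by case/andP: Hj.
rewrite (FP_tr _ _ _ _ _ _ Li) (FP_tr _ _ _ _ _ _ Lj) (FP_tr _ _ _ _ _ _ (Hl _ Hi)) (FP_tr _ _ _ _ _ _ (Hl _ Hj)).
rewrite ltrD2r (ltr_pM2l k0) => H.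
rewrite ltrD2r (ltr_pM2l k0).
by apply: (Hrev t' _ xi xj) => //; rewrite /induced E.
Qed.
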